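(* Let $0<\varepsilon<\frac12$, let $n\ge C\varepsilon^{-2.01}$ for a sufficiently large constant $C$, let $c>0$ be a sufficiently small constant, set $r=s=c\log(n)/\sqrt{\varepsilon}$ and $k=(n-1)/(r+1)$ (an integer), with $k\ge 100s$, and let $A=UDU^\top$, $g_1,\dots,g_s$, $u_1$, $a_{j,t}$, $v_{j,t}$, $V^{(t)}$ be as described in the context. Suppose that the following three events hold: (1) $a_{j,1}\le 5\sqrt{\log n}$ for all $j\in[s]$; (2) $0.5\sqrt{k}\le a_{j,t}\le 2\sqrt{k}$ for all $j\in[s]$ and $2\le t\le r+2$; (3) for every $2\le t\le r+2$, all singular values of $V^{(t)}$ lie in $[\frac14,4]$. Then every unit vector $v\in\mathrm{Span}\{A^{\ell}g_j:0\le\ell\le r,\ 1\le j\le s\}$ satisfies $|\langle v,u_1\rangle|<\sqrt{\varepsilon/10}$.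
   Context: $\lambda_1=1+2\varepsilon$ and $\lambda_t=\cos\left(\frac{t-2}{r}\pi\right)$ for $2\le t\le r+2$. $D$ is the $n\times n$ diagonal matrix with $D_{1,1}=\lambda_1$ and $D_{i,i}=\lambda_{1+\lceil (i-1)/k\rceil}$ for $2\le i\le n$. $U$ is an $n\times n$ orthogonal matrix and $A=UDU^\top$; $u_1$ is the unit eigenvector of eigenvalue $\lambda_1$. $g_1,\dots,g_s\in\mathbb{R}^n$ are vectors. $a_{j,1}=|\langle g_j,u_1\rangle|$; for $2\le t\le r+2$, with $P_t$ the orthogonal projection onto the $\lambda_t$-eigenspace of $A$, $a_{j,t}=\|P_tg_j\|_2$, $v_{j,t}=P_tg_j/a_{j,t}$, and $V^{(t)}\in\mathbb{R}^{n\times s}$ has $j$-th column $v_{j,t}$. *)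

(* Defs.v *)
From HB Require Import structures.
From mathcomp Require Import all_boot all_order all_algebra.
From mathcomp Require Import reals exp trigo.
Set Implicit Arguments.
Unset Strict Implicit.
Unset Printing Implicit Defensive.
Import Order.TTheory GRing.Theory Num.Theory.
Local Open Scope ring_scope.

Definition dotv (R : realType) n (x y : 'cV[R]_n) : R := (x^T *m y) 0 0.
Definition normv (R : realType) n (x : 'cV[R]_n) : R := Num.sqrt (dotv x x).

Definition lam1 (R : realType) (eps : R) : R := 1 + 2 * eps.
Definition lamt (R : realType) (r t : nat) : R := cos ((t - 2)%:R / r%:R * pi).

(* D: with 0-based index i (= paper's i-1), D_{0,0} = lambda_1 and
   D_{i,i} = lambda_{1 + ceil(i/k)} for 1 <= i <= n-1;
   ceil(i/k) = (i + k - 1) %/ k for k > 0. *)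
Definition Dmat (R : realType) (n k r : nat) (eps : R) : 'M[R]_n :=
  diag_mx (\row_(i < n) if (i : nat) == 0%N then lam1 eps
                        else lamt R r (1 + (i + k - 1) %/ k)).

Definition orthogonal_mx (R : realType) n (U : 'M[R]_n) : Prop :=
  U^T *m U = 1%:M /\ U *m U^T = 1%:M.

Definition eigvec_set (R : realType) n (A : 'M[R]_n) (l : R) (x : 'cV[R]_n) : Prop :=
  A *m x = l *: x.

Definition is_orth_proj_onto (R : realType) n (P : 'M[R]_n) (S : 'cV[R]_n -> Prop) : Prop :=
  P^T = P /\ P *m P = P /\ (forall x, S x <-> P *m x = x).

(* sigma is a singular value of M : 'M_(m,p) (used with p <= m):
   sigma >= 0 and sigma^2 is an eigenvalue of M^T M. *)
Definition singular_value (R : realType) m p (M : 'M[R]_(m, p)) (sigma : R) : Prop :=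
  0 <= sigma /\ eigenvalue (M^T *m M) (sigma ^+ 2).

Definition in_krylov (R : realType) n r s (A : 'M[R]_n) (g : 'I_s -> 'cV[R]_n)
  (v : 'cV[R]_n) : Prop :=
  exists beta : 'I_r.+1 -> 'I_s -> R,
    v = \sum_(l < r.+1) \sum_(j < s) beta l j *: (A ^+ l *m g j).

Definition acoef (R : realType) n s (u1 : 'cV[R]_n) (P : nat -> 'M[R]_n)
  (g : 'I_s -> 'cV[R]_n) (j : 'I_s) (t : nat) : R :=
  if t == 1%N then `|dotv (g j) u1| else normv (P t *m g j).

Definition Vmat (R : realType) n s (u1 : 'cV[R]_n) (P : nat -> 'M[R]_n)
  (g : 'I_s -> 'cV[R]_n) (t : nat) : 'M[R]_(n, s) :=
  \matrix_(i < n, j < s) ((P t *m g j) i 0 / acoef u1 P g j t).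

(* Main.v *)
Require Import Defs.
From HB Require Import structures.
From mathcomp Require Import all_boot all_order all_algebra.
From mathcomp Require Import reals exp trigo.
From mathcomp Require Import sequences complex.
From mathcomp Require Import zify ring lra.
Import Order.TTheory GRing.Theory Num.Theory.
Local Open Scope ring_scope.

Module Helpers.
Set Implicit Arguments.
Unset Strict Implicit.
Unset Printing Implicit Defensive.
Section RaySec.
Local Open Scope sesquilinear_scope.


Lemma rayleigh (R : rcfType) s (M : 'M[R]_s) (m : R) :
  M^T = M -> (forall a, eigenvalue M a -> m <= a) ->
  forall x : 'rV[R]_s, m * (x *m x^T) 0 0 <= (x *m M *m x^T) 0 0.
Proof.
move=> Msym Meig x.
pose f := real_complex R.
pose Mc := map_mx f M.
have Mreal : Mc \is a realmx.
  by apply/mxOverP => i j; rewrite mxE; apply/complex_realP; exists (M i j).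
have Mcsym : Mc \is symmetricmx.
  by apply/is_hermitianmxP; rewrite expr0 scale1r map_mx_id // /Mc map_trmx Msym.
have Mherm : Mc \is hermsymmx by exact: realsym_hermsym.
have Mnorm : Mc \is normalmx by exact: hermitian_normalmx.
have Pu := spectral_unitarymx Mc.
set P := spectralmx Mc in Pu.
set d := spectral_diag Mc.
have dreal : d \is a realmx by exact: hermitian_spectral_diag_real.
have Mc_eq : Mc = invmx P *m diag_mx d *m P by exact/orthomx_spectralP.
have iP : invmx P = P ^t* by exact: invmx_unitary.
have PPt : P *m P^t* = 1%:M by exact/unitarymxP.
have PtP : P^t* *m P = 1%:M by rewrite -iP mulVmx // unitarymx_unit.
have conjf : forall a : R, (f a)^* = f a.
  by move=> a; apply: conj_Creal; apply/complex_realP; exists a.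
have xct : (map_mx f x)^t* = map_mx f x^T.
  by apply/matrixP => i j; rewrite !mxE conjf.
pose xc := map_mx f x.
pose w := xc *m P^t*.
have wt : w^t* = P *m xc^t*.
  by rewrite /w trmx_mul map_mxM trmxCK.
have eq1 : f ((x *m M *m x^T) 0 0) = (w *m diag_mx d *m w^t*) 0 0.
  have -> : w *m diag_mx d *m w^t* = xc *m Mc *m xc^t*.
    by rewrite wt /w Mc_eq iP !mulmxA.
  by rewrite /xc xct /Mc /f -!map_mxM [RHS]mxE.
have eq2 : f ((x *m x^T) 0 0) = (w *m w^t*) 0 0.
  have -> : w *m w^t* = xc *m xc^t*.
    by rewrite wt /w mulmxA -[xc *m _ *m P]mulmxA PtP mulmx1.
  by rewrite /xc xct /f -map_mxM [RHS]mxE.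
have deig : forall i, f m <= d 0 i.
  move=> i.
  have dr : d 0 i \is Num.real by move/mxOverP: dreal; apply.
  have [k dk] := complex_realP _ dr.
  rewrite dk /f lecR; apply: Meig.
  suff E : eigenvalue Mc (d 0 i).
    rewrite -(eigenvalue_map (real_complex R)); rewrite dk in E; exact E.
  apply/eigenvalueP; exists (row i P).
    have : P *m Mc = diag_mx d *m P.
      by rewrite Mc_eq !mulmxA mulmxV ?unitarymx_unit // mul1mx.
    move/(congr1 (row i)); rewrite -!row_mul => ->.
    by rewrite mul_diag_mx; apply/rowP => j; rewrite !mxE.
  apply/negP => /eqP r0.
  move: PPt => /(congr1 (row i)); rewrite row_mul r0 mul0mx => /rowP /(_ i).
  by rewrite !mxE eqxx /= => /eqP; rewrite eq_sym oner_eq0.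
rewrite -lecR; change (f (m * (x *m x^T) 0 0) <= f ((x *m M *m x^T) 0 0)).
have -> : f (m * (x *m x^T) 0 0) = f m * f ((x *m x^T) 0 0) by exact: (rmorphM (real_complex R)).
rewrite eq1 eq2.
rewrite mul_mx_diag !mxE mulr_sumr; apply: ler_sum => j _; rewrite !mxE.
rewrite mulrAC [X in _ <= X]mulrC; apply: ler_wpM2r; last exact: deig.
exact: mul_conjC_ge0.
Qed.

End RaySec.

Section Interp.
Variable R : rcfType.
Variable r : nat.
Variable x : 'I_r.+1 -> R.
Hypothesis xdec : forall i j : 'I_r.+1, (i < j)%N -> x j < x i.

Lemma x_inj : injective x.
Proof.
move=> i j eij; case: (ltngtP i j) => h; last exact: val_inj.
  by move: (xdec h); rewrite eij ltxx.
by move: (xdec h); rewrite eij ltxx.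
Qed.

Definition cL (m : 'I_r.+1) : R := (\prod_(i < r.+1 | i != m) (x m - x i))^-1.
Definition L (m : 'I_r.+1) : {poly R} :=
  cL m *: \prod_(i < r.+1 | i != m) ('X - (x i)%:P).

Lemma hornerL m y : (L m).[y] = cL m * \prod_(i < r.+1 | i != m) (y - x i).
Proof.
by rewrite /L hornerZ horner_prod; congr (_ * _); apply: eq_bigr => i _; rewrite hornerXsubC.
Qed.

Lemma L_nodes m j : (L m).[x j] = (j == m)%:R.
Proof.
rewrite hornerL; case: eqP => [->|/eqP jm].
  rewrite /cL mulVf //; rewrite prodf_seq_neq0; apply/allP => i _; apply/implyP => im.
  by rewrite subr_eq0; apply/eqP => /x_inj /eqP; rewrite eq_sym (negbTE im).
by rewrite (bigD1 j) //= subrr mul0r mulr0.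
Qed.

Lemma size_L m : (size (L m) <= r.+1)%N.
Proof.
apply: leq_trans (size_scale_leq _ _) _.
rewrite size_prod; last by move=> i _; rewrite polyXsubC_eq0.
under eq_bigr do rewrite size_XsubC.
rewrite sum_nat_const cardC1 card_ord /=.
by lia.
Qed.

Lemma poly_uniq (d : {poly R}) : (size d <= r.+1)%N ->
  (forall i, d.[x i] = 0) -> d = 0.
Proof.
move=> sd dz; apply/eqP; apply/negP => /negP dn0.
have := max_poly_roots dn0 (rs := [seq x i | i <- enum 'I_r.+1]).
have hall : all (root d) [seq x i | i <- enum 'I_r.+1].
  by apply/allP => _ /mapP [i _ ->]; apply/rootP.
have hu : uniq [seq x i | i <- enum 'I_r.+1].
  by rewrite (map_inj_uniq x_inj) enum_uniq.
by move=> /(_ hall hu); rewrite size_map size_enum_ord ltnNge sd.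
Qed.

Lemma lagrange (p : {poly R}) : (size p <= r.+1)%N ->
  p = \sum_(m < r.+1) p.[x m] *: L m.
Proof.
move=> sp; apply/eqP; rewrite -subr_eq0; apply/eqP; apply: poly_uniq.
  apply: leq_trans (size_add _ _) _; rewrite geq_max sp size_polyN.
  apply: leq_trans (size_sum _ _ _) _; apply/bigmax_leqP => m _.
  exact: leq_trans (size_scale_leq _ _) (size_L m).
move=> i; rewrite hornerD hornerN horner_sum.
rewrite (bigD1 i) //= big1 ?addr0.
  by rewrite hornerZ L_nodes eqxx mulr1 subrr.
by move=> m mi; rewrite hornerZ L_nodes eq_sym (negbTE mi) mulr0.
Qed.

Lemma sign_L (m : 'I_r.+1) y : x ord0 <= y -> 0 <= (-1) ^+ m * (L m).[y].
Proof.
move=> hy.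
pose sg (i : 'I_r.+1) : R := if (i < m)%N then -1 else 1.
have hs1 : \prod_(i < r.+1 | i != m) sg i = \prod_(i < r.+1) sg i.
  by rewrite [RHS](bigD1 m) //= /sg ltnn mul1r.
have hs2 : \prod_(i < r.+1) sg i = (-1) ^+ m.
  rewrite /sg -(big_mkord xpredT (fun i => if (i < m)%N then -1 else 1)).
  rewrite (big_cat_nat _ (n:=m)) //=; last exact: ltnW (ltn_ord m).
  rewrite big_nat_cond (eq_bigr (fun _ => -1)); last first.
    by move=> i /andP[/andP[_ ->] _].
  rewrite -big_nat_cond prodr_const_nat subn0 big_nat_cond big1 ?mulr1 //.
  by move=> i /andP[/andP[h _] _]; rewrite ltnNge h.
rewrite hornerL /cL -hs2 -hs1 -prodfV mulrA -!big_split /=.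
apply: prodr_ge0 => i im.
have xi0 : x i <= x ord0.
  case: (posnP i) => [i0|ip]; last exact/ltW/xdec.
  by rewrite (_ : i = ord0) //; apply: val_inj.
apply: mulr_ge0; last by rewrite subr_ge0 (le_trans xi0 hy).
rewrite /sg; case: ifP => him.
  by rewrite mulN1r oppr_ge0 invr_le0 subr_le0 ltW // xdec.
rewrite mul1r invr_ge0 subr_ge0 ltW // xdec //.
by rewrite ltn_neqAle eq_sym im leqNgt him.
Qed.

Lemma interp_bound (q p : {poly R}) y :
  (size q <= r.+1)%N -> (forall m : 'I_r.+1, q.[x m] = (-1) ^+ m) ->
  (size p <= r.+1)%N -> x ord0 <= y ->
  p.[y] ^+ 2 <= q.[y] ^+ 2 * \sum_(m < r.+1) p.[x m] ^+ 2.
Proof.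
move=> sq qx sp hy.
have hq : q.[y] = \sum_(m < r.+1) `|(L m).[y]|.
  rewrite {1}(lagrange sq) horner_sum; apply: eq_bigr => m _.
  rewrite hornerZ qx -(ger0_norm (sign_L m hy)) normrM normrX normrN1 expr1n mul1r //.
have hp : p.[y] = \sum_(m < r.+1) p.[x m] * (L m).[y].
  by rewrite {1}(lagrange sp) horner_sum; apply: eq_bigr => m _; rewrite hornerZ.
set S := \sum_(m < r.+1) p.[x m] ^+ 2.
have S0 : 0 <= S by apply: sumr_ge0 => m _; exact: sqr_ge0.
set K := Num.sqrt S.
have hK : forall m, `|p.[x m]| <= K.
  move=> m; rewrite -sqrtr_sqr; apply: ler_wsqrtr.
  rewrite /S (bigD1 m) //= lerDl; apply: sumr_ge0 => i _; exact: sqr_ge0.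
have hpy : `|p.[y]| <= K * q.[y].
  rewrite hp hq mulr_sumr; apply: le_trans (ler_norm_sum _ _ _) _.
  apply: ler_sum => m _; rewrite normrM; apply: ler_wpM2r => //.
have K0 : 0 <= K by exact: sqrtr_ge0.
rewrite -real_normK ?num_real // (_ : S = K ^+ 2); last by rewrite sqr_sqrtr.
rewrite -exprMn mulrC; apply: lerXn2r => //; rewrite ?nnegrE //.
by apply: le_trans hpy.
Qed.

End Interp.

Fixpoint chebp (R : nzRingType) (n : nat) : {poly R} * {poly R} :=
  match n with
  | 0 => (1, 'X)
  | n'.+1 => ((chebp R n').2, 'X * (chebp R n').2 *+ 2 - (chebp R n').1)
  end.

Definition cheb (R : nzRingType) n := (chebp R n).1.

Lemma size_chebp (R : nzRingType) n :
  (size (chebp R n).1 <= n.+1)%N /\ (size (chebp R n).2 <= n.+2)%N.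
Proof.
elim: n => [|n [h1 h2]] /=.
  by rewrite size_poly1 size_polyX.
split=> //.
apply: leq_trans (size_add _ _) _; rewrite geq_max size_polyN (leq_trans h1) ?andbT; last by lia.
rewrite mulr2n; apply: leq_trans (size_add _ _) _; rewrite geq_max andbb.
apply: leq_trans (size_polyMleq _ _) _; rewrite size_polyX /=; exact: h2.
Qed.

Lemma size_cheb (R : nzRingType) n : (size (cheb R n) <= n.+1)%N.
Proof. exact: (size_chebp R n).1. Qed.

Section Trig.
Variable R : realType.

Lemma cheb_cos n (t : R) :
  (chebp R n).1.[cos t] = cos (n%:R * t) /\ (chebp R n).2.[cos t] = cos (n.+1%:R * t).
Proof.
elim: n => [|n [h1 h2]] /=.
  by rewrite hornerC hornerX mul0r cos0 mul1r.
split=> //.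
rewrite hornerD hornerN hornerMn hornerM hornerX h1 h2.
have e1 : n.+2%:R * t = n.+1%:R * t + t by rewrite -[n.+2]addn1 natrD mulrDl mul1r.
have e2 : n%:R * t = n.+1%:R * t - t by rewrite -[n.+1]addn1 natrD mulrDl mul1r addrK.
rewrite e1 e2 cosB cosD; ring.
Qed.

Lemma cos_natpi m : cos (m%:R * pi) = (-1) ^+ m :> R.
Proof.
elim: m => [|m IH]; first by rewrite mul0r cos0 expr0.
by rewrite -addn1 natrD mulrDl mul1r cosDpi IH exprD expr1 mulrN1.
Qed.

End Trig.

Lemma cheb_bound (R : realFieldType) (y B : R) n :
  1 <= y -> y <= B -> B * (y *+ 2 - B) <= 1 ->
  0 <= (chebp R n).1.[y] /\ (chebp R n).1.[y] <= (chebp R n).2.[y] /\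
  (chebp R n).2.[y] <= B * (chebp R n).1.[y] /\ (chebp R n).1.[y] <= B ^+ n.
Proof.
move=> y1 yB hB.
elim: n => [|n [h0 [h1 [h2 h3]]]] /=.
  rewrite hornerC hornerX expr0 mulr1; lra.
set a := (chebp R n).1.[y] in h0 h1 h2 h3 *.
set b := (chebp R n).2.[y] in h1 h2 *.
rewrite hornerD hornerN hornerMn hornerM hornerX -/a -/b mulr2n.
have b0 : 0 <= b by lra.
split; first lra.
split.
  have : 0 <= (y - 1) * b by apply: mulr_ge0; lra.
  lra.
split; last by rewrite exprS; apply: le_trans h2 _; apply: ler_wpM2l; lra.
rewrite mulr2n in hB.
have [hn|hp] := lerP (y + y - B) 0.
  have : (y + y - B) * b <= 0 by apply: mulr_le0_ge0.
  lra.
have : (y + y - B) * b <= (y + y - B) * (B * a) by apply: ler_wpM2l; lra.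
have : (B * (y + y - B)) * a <= 1 * a by apply: ler_wpM2r.
lra.
Qed.

Section Nodes.
Variable R : realType.

Lemma node_in (r : nat) (m : 'I_r.+1) : (0 < r)%N ->
  (m%:R / r%:R * pi : R) \in `[0, pi].
Proof.
move=> r0; rewrite in_itv /=; apply/andP; split.
  by apply: mulr_ge0; [apply: divr_ge0|exact: pi_ge0].
rewrite ler_piMl ?pi_ge0 // ler_pdivrMr ?ltr0n // mul1r ler_nat.
by rewrite -ltnS.
Qed.

Lemma nodes_dec (r : nat) (i j : 'I_r.+1) : (0 < r)%N -> (i < j)%N ->
  cos (j%:R / r%:R * pi) < cos (i%:R / r%:R * pi) :> R.
Proof.
move=> r0 ij; rewrite ltr_cos ?node_in //.
rewrite ltr_pM2r ?pi_gt0 // ltr_pM2r ?invr_gt0 ?ltr0n // ltr_nat //.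
Qed.

Lemma cheb_node (r : nat) (m : nat) : (0 < r)%N ->
  (cheb R r).[cos (m%:R / r%:R * pi)] = (-1) ^+ m.
Proof.
move=> r0; rewrite /cheb (cheb_cos r (m%:R / r%:R * pi)).1.
rewrite mulrA mulrCA divff ?mulr1 ?cos_natpi // pnatr_eq0 -lt0n //.
Qed.

End Nodes.

Definition cconst (R : realType) : R := ((10 : R) ^+ 7)^-1.

Lemma numeric (R : realType) (eps T : R) (n r : nat) :
  0 < eps < 2^-1 ->
  powR eps (- (201%:R / 100)) <= n%:R ->
  r%:R <= cconst R * ln n%:R / Num.sqrt eps ->
  (1 <= r)%N -> (2 <= n)%N ->
  0 <= T -> T <= expR (4 * Num.sqrt eps * r%:R) ->
  (16 * 10 ^+ 3) * r%:R * (r%:R + 1) * T ^+ 2 * ln n%:R < eps * (n%:R - 1).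
Proof.
move=> /andP[e0 e1] hpow hr r1 n2 T0 hT.
set c := cconst R.
have c0 : 0 < c by rewrite /c /cconst invr_gt0 exprn_gt0 // ltr0n.
have c8 : 8 * c <= 804^-1.
  rewrite /c /cconst; lra.
set q := Num.sqrt eps.
have q0 : 0 < q by rewrite sqrtr_gt0.
have qq : q ^+ 2 = eps by rewrite sqr_sqrtr // ltW.
set L := ln n%:R.
have n1 : 1 < (n%:R : R) by rewrite ltr1n.
have n0 : 0 < (n%:R : R) by lra.
have L0 : 0 < L by apply: ln_gt0.
have hrq : r%:R * q <= c * L by rewrite -ler_pdivlMr.
have r0 : 1 <= (r%:R : R) by rewrite ler1n.
set E := expR (L / 804).
have E0 : 0 < E by apply: expR_gt0.
have hT2 : T ^+ 2 <= E.
  apply: le_trans (_ : T ^+ 2 <= expR (4 * q * r%:R) ^+ 2) _.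
    by apply: lerXn2r => //; rewrite nnegrE ?expR_ge0.
  rewrite -expRM_natl ler_expR.
  have : 8 * (c * L) <= L / 804.
    by rewrite mulrA; apply: le_trans (ler_wpM2r (ltW L0) c8) _; rewrite mulrC.
  nra.
have hL : L <= 804 * E.
  have := expR_ge1Dx (L / 804); rewrite -/E; lra.
have heps : E ^+ 4 <= eps ^+ 2 * n%:R.
  have le : ln eps * (201%:R / 100) >= - L.
    move: hpow; rewrite /powR gt_eqF // -[X in _ <= X](lnK n0) ler_expR -/L.
    lra.
  rewrite -[eps in X in _ <= X](lnK e0) -[n%:R in X in _ <= X](lnK n0) -/L.
  rewrite -expRM_natl -expRD /E -expRM_natl ler_expR.
  lra.
set LHS := (16 * 10 ^+ 3) * r%:R * (r%:R + 1) * T ^+ 2 * L.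
have rr : r%:R * (r%:R + 1) <= 2 * r%:R ^+ 2 :> R.
  by move: r0; clear; move: (r%:R : R) => x hx; rewrite expr2; nra.
have erq : eps * r%:R ^+ 2 <= (c * L) ^+ 2.
  rewrite -qq -exprMn mulrC; apply: lerXn2r => //; rewrite nnegrE.
    by apply: mulr_ge0; lra.
  by apply: mulr_ge0; lra.
have cc : c ^+ 2 * (32 * 10 ^+ 3) * 804 ^+ 3 < 2^-1 by rewrite /c /cconst; lra.
have hL3 : L ^+ 3 <= (804 * E) ^+ 3.
  by apply: lerXn2r => //; rewrite nnegrE; lra.
have step1 : eps * LHS <= (32 * 10 ^+ 3) * (c * L) ^+ 2 * E * L.
  rewrite /LHS.
  have h1 : eps * (r%:R * (r%:R + 1)) <= 2 * (c * L) ^+ 2.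
    apply: le_trans (_ : eps * (2 * r%:R ^+ 2) <= _).
      by apply: ler_wpM2l; lra.
    lra.
  have h2 : eps * (r%:R * (r%:R + 1)) * (T ^+ 2 * L) <= 2 * (c * L) ^+ 2 * (E * L).
    apply: ler_pM => //.
    - by apply: mulr_ge0; [lra| apply: mulr_ge0; lra].
    - by apply: mulr_ge0; [apply: sqr_ge0|lra].
    - by apply: ler_wpM2r; lra.
  have -> : eps * ((16 * 10 ^+ 3) * r%:R * (r%:R + 1) * T ^+ 2 * L) =
      (16 * 10 ^+ 3) * (eps * (r%:R * (r%:R + 1)) * (T ^+ 2 * L)) by ring.
  have -> : (32 * 10 ^+ 3) * (c * L) ^+ 2 * E * L = (16 * 10 ^+ 3) * (2 * (c * L) ^+ 2 * (E * L)) by ring.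
  by apply: ler_wpM2l => //; lra.
have step2 : (32 * 10 ^+ 3) * (c * L) ^+ 2 * E * L <= (c ^+ 2 * (32 * 10 ^+ 3) * 804 ^+ 3) * E ^+ 4.
  have -> : (32 * 10 ^+ 3) * (c * L) ^+ 2 * E * L = (c ^+ 2 * (32 * 10 ^+ 3)) * E * L ^+ 3 by ring.
  have -> : (c ^+ 2 * (32 * 10 ^+ 3) * 804 ^+ 3) * E ^+ 4 = (c ^+ 2 * (32 * 10 ^+ 3)) * E * (804 * E) ^+ 3 by ring.
  apply: ler_wpM2l => //; apply: mulr_ge0; [apply: mulr_ge0; [apply: sqr_ge0|lra]|lra].
have E4 : 0 < E ^+ 4 by apply: exprn_gt0.
have step3 : (c ^+ 2 * (32 * 10 ^+ 3) * 804 ^+ 3) * E ^+ 4 < eps * (eps * (n%:R - 1)).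
  have h : eps ^+ 2 * n%:R <= 2 * (eps * (eps * (n%:R - 1))).
    have : 2 <= (n%:R : R) by rewrite ler_nat.
    rewrite expr2 => hn2; have ee : 0 <= eps * eps by nra.
    nra.
  have : (c ^+ 2 * (32 * 10 ^+ 3) * 804 ^+ 3) * E ^+ 4 < 2^-1 * E ^+ 4 by rewrite ltr_pM2r.
  lra.
have : eps * LHS < eps * (eps * (n%:R - 1)) by apply: le_lt_trans step3; exact: le_trans step2.
by rewrite ltr_pM2l.
Qed.

Section LA.
Variable R : realType.
Variable n : nat.
Implicit Types x y z : 'cV[R]_n.

Lemma dotvE x y : dotv x y = \sum_i x i 0 * y i 0.
Proof. by rewrite /dotv mxE; apply: eq_bigr => i _; rewrite mxE. Qed.

Lemma dotvC x y : dotv x y = dotv y x.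
Proof. by rewrite !dotvE; apply: eq_bigr => i _; rewrite mulrC. Qed.

Lemma dotvDl x y z : dotv (x + y) z = dotv x z + dotv y z.
Proof. by rewrite !dotvE -big_split; apply: eq_bigr => i _; rewrite mxE mulrDl. Qed.

Lemma dotvZl a x y : dotv (a *: x) y = a * dotv x y.
Proof. by rewrite !dotvE mulr_sumr; apply: eq_bigr => i _; rewrite mxE mulrA. Qed.

Lemma dotv_suml I (s : seq I) (F : I -> 'cV[R]_n) y :
  dotv (\sum_(i <- s) F i) y = \sum_(i <- s) dotv (F i) y.
Proof.
elim: s => [|a s IH]; first by rewrite !big_nil dotvE big1 // => i _; rewrite mxE mul0r.
by rewrite !big_cons dotvDl IH.
Qed.

Lemma dotv_sumr I (s : seq I) (F : I -> 'cV[R]_n) y :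
  dotv y (\sum_(i <- s) F i) = \sum_(i <- s) dotv y (F i).
Proof. by rewrite dotvC dotv_suml; apply: eq_bigr => i _; rewrite dotvC. Qed.

Lemma dotv_mull (A : 'M[R]_n) x y : dotv (A *m x) y = dotv x (A^T *m y).
Proof. by rewrite /dotv trmx_mul mulmxA. Qed.

Lemma dotv_ge0 x : 0 <= dotv x x.
Proof. by rewrite dotvE; apply: sumr_ge0 => i _; rewrite -expr2 sqr_ge0. Qed.

Lemma normv1 x : normv x = 1 -> dotv x x = 1.
Proof.
move=> h; have := sqr_sqrtr (dotv_ge0 x); rewrite -/(normv x) h expr1n.
by move=> <-.
Qed.

Lemma dotvBB x y : dotv (x - y) (x - y) = dotv x x - dotv x y *+ 2 + dotv y y.
Proof.
rewrite !dotvE -sumrMnl -sumrB -big_split /=; apply: eq_bigr => i _.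
rewrite !mxE; ring.
Qed.

Lemma proj_le (Q : 'M[R]_n) x : Q^T = Q -> Q *m Q = Q ->
  dotv x (Q *m x) <= dotv x x.
Proof.
move=> Qs Qi.
have e : dotv x (Q *m x) = dotv (Q *m x) (Q *m x).
  by rewrite dotv_mull Qs mulmxA Qi.
have : dotv x x = dotv (Q *m x) (Q *m x) + dotv (x - Q *m x) (x - Q *m x).
  have -> : dotv (x - Q *m x) (x - Q *m x) = dotv x x - dotv x (Q *m x).
    by rewrite dotvBB -e; ring.
  by rewrite -e; ring.
move=> ->; rewrite e lerDl; exact: dotv_ge0.
Qed.

Lemma proj_sym_dot (P : 'M[R]_n) x : P^T = P -> P *m P = P ->
  dotv x (P *m x) = dotv (P *m x) (P *m x).
Proof. by move=> Ps Pi; rewrite dotv_mull Ps mulmxA Pi. Qed.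

End LA.

Lemma cs_sum (R : realFieldType) s (a : 'I_s -> R) :
  (\sum_i a i) ^+ 2 <= s%:R * \sum_i a i ^+ 2.
Proof.
have h : 0 <= \sum_i \sum_j (a i - a j) ^+ 2.
  by apply: sumr_ge0 => i _; apply: sumr_ge0 => j _; exact: sqr_ge0.
have e : \sum_i \sum_j (a i - a j) ^+ 2 = (s%:R * \sum_i a i ^+ 2) *+ 2 - ((\sum_i a i) ^+ 2) *+ 2.
  have e1 : forall i, \sum_j (a i - a j) ^+ 2 =
      s%:R * a i ^+ 2 - (a i * \sum_j a j) *+ 2 + \sum_j a j ^+ 2.
    move=> i; rewrite mulr_sumr -sumrMnl.
    have -> : s%:R * a i ^+ 2 = \sum_(j < s) a i ^+ 2 by rewrite sumr_const card_ord mulr_natl.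
    rewrite -sumrB -big_split /=; apply: eq_bigr => j _; ring.
  rewrite (eq_bigr _ (fun i _ => e1 i)) big_split /= sumrB sumr_const card_ord.
  rewrite -mulr_sumr sumrMnl -mulr_suml -expr2 -mulr_natr; ring.
by move: h; rewrite e subr_ge0 lerMn2r.
Qed.

Section Spec.
Variable R : realType.
Variable n : nat.
Implicit Types (A P : 'M[R]_n).

Lemma dot_pow A (u g : 'cV[R]_n) (lam : R) l : A^T = A -> A *m u = lam *: u ->
  dotv (A ^+ l *m g) u = lam ^+ l * dotv g u.
Proof.
move=> As Au; elim: l => [|l IH]; first by rewrite expr0 mul1mx mul1r.
rewrite exprS -mulmxE -mulmxA dotv_mull As Au dotvC dotvZl dotvC IH.
by rewrite exprS mulrA.
Qed.

Lemma proj_pow A P (g : 'cV[R]_n) (lam : R) l : P *m A = lam *: P ->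
  P *m (A ^+ l *m g) = lam ^+ l *: (P *m g).
Proof.
move=> PA; elim: l => [|l IH]; first by rewrite expr0 mul1mx scale1r.
rewrite exprS -mulmxE -mulmxA mulmxA PA -scalemxAl IH scalerA -exprS //.
Qed.

Lemma AP A P (lam : R) : A^T = A ->
  is_orth_proj_onto P (eigvec_set A lam) ->
  A *m P = lam *: P /\ P *m A = lam *: P.
Proof.
move=> As [Ps [Pi HP]].
have h1 : A *m P = lam *: P.
  apply/matrixP => i j.
  have := (HP (P *m delta_mx j 0)).2; rewrite mulmxA Pi => /(_ erefl).
  rewrite /eigvec_set => /(congr1 (fun M : 'cV_n => M i 0)).
  by rewrite mulmxA -!colE !mxE.
split=> //.
by rewrite -[P]Ps -[A]As -trmx_mul h1 linearZ /= Ps.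
Qed.

Lemma PP0 A P1 P2 (l1 l2 : R) : P1 *m A = l1 *: P1 -> A *m P2 = l2 *: P2 ->
  l1 != l2 -> P1 *m P2 = 0.
Proof.
move=> h1 h2 ne.
have : (l1 - l2) *: (P1 *m P2) = 0.
  by rewrite scalerBl scalemxAl -h1 scalemxAr -h2 mulmxA subrr.
move/eqP; rewrite scaler_eq0 subr_eq0 (negbTE ne) /= => /eqP //.
Qed.

End Spec.

Lemma row_sq_pos (R : realFieldType) s (w : 'rV[R]_s) : w != 0 -> 0 < (w *m w^T) 0 0.
Proof.
move=> wn0; rewrite mxE lt_def; apply/andP; split; last first.
  by apply: sumr_ge0 => i _; rewrite mxE -expr2 sqr_ge0.
apply: contra wn0 => /eqP h; apply/eqP/rowP => i; rewrite mxE.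
have : \sum_(j < s) w 0 j * w^T j 0 = 0 := h.
under eq_bigr do rewrite mxE -expr2.
move/psumr_eq0P => /(_ (fun j _ => sqr_ge0 _) i isT) /eqP.
by rewrite sqrf_eq0 => /eqP.
Qed.

Lemma eig_VtV (R : realFieldType) nn s (V : 'M[R]_(nn, s)) a :
  eigenvalue (V^T *m V) a -> 0 <= a.
Proof.
move=> /eigenvalueP [w hw wn0].
have h : (w *m (V^T *m V) *m w^T) 0 0 = a * (w *m w^T) 0 0.
  by rewrite hw -scalemxAl mxE.
have h2 : 0 <= (w *m (V^T *m V) *m w^T) 0 0.
  rewrite mulmxA -mulmxA (_ : V *m w^T = (w *m V^T)^T); last by rewrite trmx_mul trmxK.
  rewrite mxE; apply: sumr_ge0 => i _; rewrite [_^T _ _]mxE -expr2 sqr_ge0 //.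
move: h2; rewrite h; have := row_sq_pos wn0.
move=> p; rewrite pmulr_lge0 //.
Qed.

End Helpers.
Import Helpers.


Theorem lemma5p6 :
  forall R : realType,
  exists C : R, 0 < C /\ exists c : R, 0 < c /\
  forall (eps : R) (n r s k : nat),
    0 < eps < 2^-1 ->
    C * powR eps (- (201%:R / 100)) <= n%:R ->
    (* r = floor (c log n / sqrt eps) *)
    r%:R <= c * ln n%:R / Num.sqrt eps < r%:R + 1 ->
    s = r ->
    n = (k * r.+1).+1 ->
    (100 * s <= k)%N ->
  forall (U : 'M[R]_n) (u1 : 'cV[R]_n) (g : 'I_s -> 'cV[R]_n)
         (P : nat -> 'M[R]_n),
    orthogonal_mx U ->
    let A := U *m Dmat n k r eps *m U^T in
    normv u1 = 1 ->
    A *m u1 = lam1 eps *: u1 ->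
    (forall t : nat, (2 <= t <= r + 2)%N ->
       is_orth_proj_onto (P t) (eigvec_set A (lamt R r t))) ->
    (* event (1) *)
    (forall j : 'I_s, acoef u1 P g j 1 <= 5 * Num.sqrt (ln n%:R)) ->
    (* event (2) *)
    (forall (j : 'I_s) (t : nat), (2 <= t <= r + 2)%N ->
       2^-1 * Num.sqrt k%:R <= acoef u1 P g j t <= 2 * Num.sqrt k%:R) ->
    (* event (3) *)
    (forall t : nat, (2 <= t <= r + 2)%N ->
       forall sigma : R, singular_value (Vmat u1 P g t) sigma ->
         4^-1 <= sigma <= 4) ->
  forall v : 'cV[R]_n,
    in_krylov r A g v -> normv v = 1 ->
    `|dotv v u1| < Num.sqrt (eps / 10).
Proof.
move=> R; exists 1; split; first exact: ltr01.
exists (cconst R); split.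
  by rewrite /cconst invr_gt0 exprn_gt0 // ltr0n.
move=> eps n r s k he hC /andP[hr _] hs hn hk U u1 g P hU A hu1 hAu1 hP ev1 ev2 ev3 v [beta hv] hv1.
subst s.
have vv : dotv v v = 1 by exact: normv1.
case: (posnP r) => [r0|rpos].
  subst r; have : dotv v v = 0.
    rewrite hv big_ord_recl big_ord0 big_ord0 addr0.
    by rewrite dotvE big1 // => i _; rewrite mxE mul0r.
  by rewrite vv => /eqP; rewrite oner_eq0.
have k0 : (100 <= k)%N by apply: leq_trans hk; rewrite leq_pmulr.
have n2 : (2 <= n)%N by rewrite hn ltnS muln_gt0; apply/andP; split; lia.
have As : A^T = A.
  by rewrite /A !trmx_mul trmxK tr_diag_mx mulmxA.
set lam := lam1 eps.
pose xs (m : 'I_r.+1) : R := cos (m%:R / r%:R * pi).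
have xsE : forall m : 'I_r.+1, lamt R r (m + 2) = xs m.
  by move=> m; rewrite /lamt addnK.
have hrange : forall m : 'I_r.+1, (2 <= m + 2 <= r + 2)%N.
  by move=> m; rewrite leq_addl leq_add2r -ltnS ltn_ord.
have hAP : forall m : 'I_r.+1, A *m P (m + 2)%N = xs m *: P (m + 2)%N /\
                                P (m + 2)%N *m A = xs m *: P (m + 2)%N.
  by move=> m; rewrite -xsE; apply: AP => //; apply: hP.
pose pj (j : 'I_r) : {poly R} := \poly_(l < r.+1) beta (inord l) j.
have hpj : forall j y, (pj j).[y] = \sum_(l < r.+1) beta l j * y ^+ l.
  by move=> j y; rewrite horner_poly; apply: eq_bigr => l _; rewrite inord_val.
have hdot : dotv v u1 = \sum_j (pj j).[lam] * dotv (g j) u1.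
  rewrite hv dotv_suml; under eq_bigr do rewrite dotv_suml.
  rewrite exchange_big /=; apply: eq_bigr => j _; rewrite hpj mulr_suml.
  by apply: eq_bigr => l _; rewrite dotvZl (dot_pow _ _ As hAu1) mulrA.
have hPv : forall m : 'I_r.+1, P (m + 2)%N *m v =
    \sum_j (pj j).[xs m] *: (P (m + 2)%N *m g j).
  move=> m; rewrite hv mulmx_sumr; under eq_bigr do rewrite mulmx_sumr.
  rewrite exchange_big /=; apply: eq_bigr => j _; rewrite hpj scaler_suml.
  apply: eq_bigr => l _.
  by rewrite -scalemxAr (proj_pow _ _ (hAP m).2) scalerA.
have hPs : forall m : 'I_r.+1, (P (m + 2)%N)^T = P (m + 2)%N.
  by move=> m; have [? _] := hP _ (hrange m).
have hPi : forall m : 'I_r.+1, P (m + 2)%N *m P (m + 2)%N = P (m + 2)%N.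
  by move=> m; have [_ [? _]] := hP _ (hrange m).
have hxdec : forall i j : 'I_r.+1, (i < j)%N -> xs j < xs i.
  by move=> i j ij; apply: nodes_dec.
have hPP : forall m m' : 'I_r.+1, m != m' -> P (m + 2)%N *m P (m' + 2)%N = 0.
  move=> m m' mm; apply: (PP0 (hAP m).2 (hAP m').1).
  case: (ltngtP m m') => h.
  - by rewrite gt_eqF // hxdec.
  - by rewrite lt_eqF // hxdec.
  - by move: mm; rewrite (val_inj h) eqxx.
pose Q := \sum_(m < r.+1) P (m + 2)%N.
have QT : Q^T = Q.
  apply/matrixP => i j; rewrite mxE !summxE; apply: eq_bigr => m _.
  by have := congr1 (fun M : 'M_n => M i j) (hPs m); rewrite mxE.
have QQ : Q *m Q = Q.
  rewrite /Q mulmx_suml; apply: eq_bigr => m _.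
  rewrite mulmx_sumr (bigD1 m) //= big1 ?addr0 ?hPi // => m' hm.
  by apply: hPP; rewrite eq_sym.
have bessel : \sum_(m < r.+1) dotv (P (m + 2)%N *m v) (P (m + 2)%N *m v) <= 1.
  have e : dotv v (Q *m v) = \sum_(m < r.+1) dotv (P (m + 2)%N *m v) (P (m + 2)%N *m v).
    by rewrite /Q mulmx_suml dotv_sumr; apply: eq_bigr => m _; rewrite proj_sym_dot.
  by rewrite -e -vv; exact: proj_le.
have kpos : (0 : R) < k%:R by rewrite ltr0n; lia.
have hlow : forall m : 'I_r.+1,
    k%:R / 64 * \sum_j (pj j).[xs m] ^+ 2 <= dotv (P (m + 2)%N *m v) (P (m + 2)%N *m v).
  move=> m.
  set t := (m + 2)%N.
  pose a j := acoef u1 P g j t.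
  have ha : forall j, k%:R / 4 <= a j ^+ 2 /\ a j != 0.
    move=> j; have /andP[h1 _] := ev2 j t (hrange m).
    have s0 : 0 < Num.sqrt (k%:R : R) by rewrite sqrtr_gt0.
    have h1' : 0 < a j by apply: lt_le_trans h1; apply: mulr_gt0 => //; rewrite invr_gt0.
    split; last by rewrite gt_eqF.
    apply: le_trans (_ : (2^-1 * Num.sqrt k%:R) ^+ 2 <= _).
      by rewrite exprMn sqr_sqrtr ?ler0n //; lra.
    apply: lerXn2r; rewrite ?nnegrE; [apply: mulr_ge0; [lra|exact: ltW] | exact: ltW | exact: h1].
  pose cv : 'cV[R]_r := \col_j ((pj j).[xs m] * a j).
  set V := Vmat u1 P g t.
  have hV : P t *m v = V *m cv.
    apply/matrixP => i z; rewrite (ord1 z) hPv summxE !mxE; apply: eq_bigr => j _.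
    rewrite !mxE; have [_ aj] := ha j; rewrite /a; field.
    exact: aj.
  have hray : 16^-1 * dotv cv cv <= dotv (V *m cv) (V *m cv).
    have := @rayleigh R r (V^T *m V) 16^-1.
    rewrite trmx_mul trmxK => /(_ erefl).
    have eig : forall a0, eigenvalue (V^T *m V) a0 -> 16^-1 <= a0.
      move=> a0 ea; have a00 := eig_VtV ea.
      have sv : singular_value V (Num.sqrt a0).
        by split; [exact: sqrtr_ge0 | rewrite sqr_sqrtr].
      have /andP[h4 _] := ev3 t (hrange m) _ sv.
      rewrite -(sqr_sqrtr a00); apply: le_trans (_ : 4^-1 ^+ 2 <= _).
        by lra.
      by apply: lerXn2r => //; rewrite nnegrE ?sqrtr_ge0 //; lra.
    move=> /(_ eig (cv^T)); rewrite trmxK /dotv trmx_mul !mulmxA //.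
  rewrite hV; apply: le_trans hray.
  rewrite dotvE mulr_sumr mulr_sumr; apply: ler_sum => j _.
  rewrite !mxE; have [h _] := ha j.
  have : 0 <= (pj j).[xs m] ^+ 2 := sqr_ge0 _.
  rewrite -expr2 exprMn; nra.
set Sig := \sum_(m < r.+1) \sum_j (pj j).[xs m] ^+ 2.
have hSig : k%:R / 64 * Sig <= 1.
  rewrite /Sig mulr_sumr; apply: le_trans bessel; apply: ler_sum => m _; exact: hlow.
have Sig0 : 0 <= Sig by apply: sumr_ge0 => m _; apply: sumr_ge0 => j _; exact: sqr_ge0.
set T := (cheb R r).[lam].
have hlam1 : 1 <= lam by rewrite /lam /lam1; lra.
have x0 : xs ord0 <= lam by rewrite /xs mul0r mul0r cos0.
have hint : forall j, (pj j).[lam] ^+ 2 <= T ^+ 2 * \sum_(m < r.+1) (pj j).[xs m] ^+ 2.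
  move=> j; apply: (@interp_bound R r xs hxdec) => //.
  - exact: size_cheb.
  - by move=> m; rewrite /xs cheb_node.
  - exact: size_poly.
have hA : \sum_j (pj j).[lam] ^+ 2 <= T ^+ 2 * Sig.
  rewrite /Sig exchange_big /= mulr_sumr; apply: ler_sum => j _; exact: hint.
set L := ln (n%:R : R).
have L0 : 0 <= L by apply: ln_ge0; rewrite ler1n; lia.
set D := dotv v u1.
have hD : D ^+ 2 <= 25 * L * (r%:R * (T ^+ 2 * Sig)).
  have h1 : `|D| <= 5 * Num.sqrt L * \sum_j `|(pj j).[lam]|.
    rewrite /D hdot mulr_sumr; apply: le_trans (ler_norm_sum _ _ _) _.
    apply: ler_sum => j _; rewrite normrM mulrC; apply: ler_wpM2r => //.
    exact: ev1.
  have h2 : (\sum_j `|(pj j).[lam]|) ^+ 2 <= r%:R * \sum_j (pj j).[lam] ^+ 2.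
    apply: le_trans (cs_sum _) _; apply: ler_wpM2l => //.
    by apply: ler_sum => j _; rewrite real_normK ?num_real.
  rewrite -real_normK ?num_real //.
  apply: le_trans (_ : (5 * Num.sqrt L * \sum_j `|(pj j).[lam]|) ^+ 2 <= _).
    apply: lerXn2r => //; rewrite nnegrE //.
    by apply: mulr_ge0; [apply: mulr_ge0 => //; exact: sqrtr_ge0| apply: sumr_ge0].
  rewrite exprMn exprMn sqr_sqrtr // (_ : 5 ^+ 2 = 25 :> R); last by lra.
  apply: ler_wpM2l; first by apply: mulr_ge0 => //; lra.
  apply: le_trans h2 _; apply: ler_wpM2l => //.
set q := Num.sqrt eps.
have e0 : 0 < eps by case/andP: he.
have e1 : eps < 2^-1 by case/andP: he.
have q0 : 0 < q by rewrite sqrtr_gt0.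
have qq : q ^+ 2 = eps by rewrite sqr_sqrtr // ltW.
have q34 : q <= 3 / 4.
  have h : q * q < 2^-1 by rewrite -expr2 qq.
  nra.
set B := 1 + 4 * q.
have lamB : lam <= B.
  suff : 0 <= B - lam by lra.
  rewrite (_ : B - lam = q * (4 - 2 * q)); last by rewrite /B /lam /lam1 -qq; ring.
  by apply: mulr_ge0; lra.
have hB : B * (lam *+ 2 - B) <= 1.
  suff : 0 <= 1 - B * (lam *+ 2 - B) by lra.
  rewrite (_ : 1 - _ = 4 * (q * q * (3 - 4 * q))); last by rewrite /B /lam /lam1 -qq; ring.
  by apply: mulr_ge0; [lra|apply: mulr_ge0; [apply: mulr_ge0|]; lra].
have [T0 [_ [_ TB]]] := cheb_bound r hlam1 lamB hB.
have hT : T <= expR (4 * q * r%:R).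
  apply: le_trans TB _; rewrite mulrC expRM_natl.
  apply: lerXn2r; rewrite ?nnegrE ?expR_ge0 //; first by rewrite /B; lra.
  exact: expR_ge1Dx.
have hnum := numeric he (eq_ind _ (fun z => z <= _) hC _ (mul1r _)) hr rpos n2 T0 hT.
have nk : (n%:R : R) - 1 = k%:R * (r%:R + 1).
  by rewrite hn -addn1 natrD addrK natrM -addn1 natrD.
rewrite -/L nk in hnum.
have r10 : (0 : R) < r%:R + 1 by rewrite ltr_pwDr // ler0n.
set X := L * r%:R * T ^+ 2.
have X0 : 0 <= X by apply: mulr_ge0; [apply: mulr_ge0 => //|exact: sqr_ge0].
have E2 : (16 * 10 ^+ 3) * X < eps * k%:R.
  rewrite -(ltr_pM2r r10).
  have -> : (16 * 10 ^+ 3) * X * (r%:R + 1) = (16 * 10 ^+ 3) * r%:R * (r%:R + 1) * T ^+ 2 * L.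
    by rewrite /X; ring.
  by rewrite -[eps * _ * _]mulrA.
have E1 : k%:R * D ^+ 2 <= 1600 * X.
  have : k%:R * D ^+ 2 <= k%:R * (25 * L * (r%:R * (T ^+ 2 * Sig))).
    by apply: ler_wpM2l => //; exact: ltW.
  have : (25 * X) * (k%:R / 64 * Sig) <= (25 * X) * 1.
    by apply: ler_wpM2l => //; apply: mulr_ge0 => //; lra.
  rewrite /X => h1 h2; apply: le_trans h2 _.
  have -> : k%:R * (25 * L * (r%:R * (T ^+ 2 * Sig))) =
      64 * (25 * (L * r%:R * T ^+ 2) * (k%:R / 64 * Sig)) by field.
  lra.
have D2 : D ^+ 2 < eps / 10.
  rewrite -(ltr_pM2l kpos); lra.
rewrite -sqrtr_sqr ltr_sqrt //; lra.
Qed.
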